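(* Let $\mathcal S,\mathcal R,\mathcal U\subset\mathbb Z^2$ be finite nonempty shapes. Suppose $X\subseteq\mathbb Z^2$ is an infinite $\mathcal S$-DDC with $m$ dots. Then there exists $t\in\mathbb Z^2$ such that the copy $\mathcal U+t$ contains at least $$\frac{m}{|\mathcal S|\cdot|\mathcal R|}\,\Delta(\mathcal S,\mathcal R)\,\Delta(\mathcal R,\mathcal U)$$ points of $X$.
   Context: Work in the square grid $\mathbb Z^2$. A shape is a finite nonempty subset of $\mathbb Z^2$. Copies of a shape $\mathcal S$ are its translates $\mathcal S+t$, $t\in\mathbb Z^2$. $|\mathcal S|$ is the number of grid points of $\mathcal S$. $\Delta(\mathcal S,\mathcal R)=\max_{t\in\mathbb Z^2}|\mathcal S\cap(\mathcal R+t)|$ is the largest intersection of $\mathcal S$ with a copy of $\mathcal R$. A finite set $Y$ of grid points (''dots'') is a distinct difference configuration (DDC) if the vectors $y-y'$, over ordered pairs $(y,y')$ of distinct points of $Y$, are pairwise distinct. Equivalently, all lines joining pairs of dots differ in length or slope. A set $X\subseteq\mathbb Z^2$ is an infinite $\mathcal S$-DDC with $m$ dots if for every $t\in\mathbb Z^2$ the set $X\cap(\mathcal S+t)$ has exactly $m$ elements and is a DDC. *)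

(* Defs.v *)
From HB Require Import structures.
From mathcomp Require Import all_boot all_order all_algebra.
Set Implicit Arguments. Unset Strict Implicit. Unset Printing Implicit Defensive.
Import Order.TTheory GRing.Theory Num.Theory.
Local Open Scope ring_scope.

Definition point := (int * int)%type.
Definition padd (p q : point) : point := (p.1 + q.1, p.2 + q.2).
Definition psub (p q : point) : point := (p.1 - q.1, p.2 - q.2).

(* A shape is represented by a duplicate-free nonempty list of its points
   (hypotheses [uniq S] and [S != [::]] are added in the theorem).
   |S| = size S. *)

Definition inter_card (S R : seq point) (t : point) : nat :=
  count (fun s => psub s t \in R) S.

(* Delta(S,R) = max_t |S ∩ (R+t)|.  Only translates t = s - r with s in S,
   r in R can give a nonzero intersection, so the max over all t equals the
   max over this finite set of candidates (and is 0 if it is empty). *)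
Definition Delta (S R : seq point) : nat :=
  \max_(s <- S) \max_(r <- R) inter_card S R (psub s r).

Definition is_DDC (Y : point -> bool) : Prop :=
  forall y1 y2 y3 y4 : point, Y y1 -> Y y2 -> Y y3 -> Y y4 ->
    y1 != y2 -> y3 != y4 -> psub y1 y2 = psub y3 y4 -> y1 = y3 /\ y2 = y4.

Definition in_copy (X : point -> bool) (S : seq point) (t : point) : point -> bool :=
  fun p => X p && (psub p t \in S).

Definition copy_card (X : point -> bool) (S : seq point) (t : point) : nat :=
  count (fun s => X (padd s t)) S.

Definition infinite_DDC (S : seq point) (X : point -> bool) (m : nat) : Prop :=
  forall t : point, copy_card X S t = m /\ is_DDC (in_copy X S t).

(* Main.v *)
Require Import Defs.
From HB Require Import structures.
From mathcomp Require Import all_boot all_order all_algebra.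
Import Order.TTheory GRing.Theory Num.Theory.
Local Open Scope ring_scope.

Lemma count_sum_b (T : Type) (a : pred T) (s : seq T) :
  count a s = (\sum_(x <- s) (a x : nat))%N.
Proof.
elim: s => [|x s IH]; first by rewrite big_nil.
by rewrite big_cons /= IH.
Qed.

Lemma avg_ex (T : eqType) (c : T -> nat) (s : seq T) : s != [::] ->
  exists x, ((\sum_(y <- s) c y)%N <= size s * c x)%N.
Proof.
elim: s => [//|x s IH] _.
case: s IH => [|y s] IH.
  by exists x; rewrite big_cons big_nil /= mul1n addn0.
have [z Hz] := IH isT.
have [le|lt] := leqP (c x) (c z).
  exists z; rewrite big_cons [size _]/= mulSn.
  exact: leq_add le Hz.
exists x; rewrite big_cons [size _]/= mulSn leq_add2l.
apply: (leq_trans Hz); rewrite leq_mul2l; apply/orP; right; exact: ltnW.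
Qed.

Lemma psub_inj (t : point) : injective (fun s => psub s t).
Proof.
move=> [a b] [c d] /= [] h1 h2.
by rewrite -(subrK t.1 a) h1 subrK -(subrK t.2 b) h2 subrK.
Qed.

Lemma inter_le (S R : seq point) t : uniq S -> (inter_card S R t <= size R)%N.
Proof.
move=> uS; rewrite /inter_card -size_filter.
rewrite -(size_map (fun s => psub s t)).
apply: uniq_leq_size.
  by rewrite map_inj_uniq ?filter_uniq //; exact: psub_inj.
by move=> x /mapP [y]; rewrite mem_filter => /andP [H _] ->.
Qed.

Lemma Delta_le (S R : seq point) : uniq S -> (Delta S R <= size R)%N.
Proof.
move=> uS; rewrite /Delta; apply/bigmax_leqP_seq => s _ _.
apply/bigmax_leqP_seq => r _ _; exact: inter_le.
Qed.

Theorem mainTheorem8 (S R U : seq point) (X : point -> bool) (m : nat) :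
  uniq S -> S != [::] -> uniq R -> R != [::] -> uniq U -> U != [::] ->
  infinite_DDC S X m ->
  exists t : point,
    (m%:R / ((size S)%:R * (size R)%:R)) * (Delta S R)%:R * (Delta R U)%:R
      <= (copy_card X U t)%:R :> rat.
Proof.
move=> uS nS uR nR uU nU HX.
have Hsum : (\sum_(s <- S) copy_card X U s = m * size U)%N.
  rewrite /copy_card.
  under eq_bigr => s _ do rewrite count_sum_b.
  rewrite exchange_big /=.
  rewrite -[size U]count_predT count_sum_b big_distrr /=.
  apply: eq_bigr => u _.
  have [<- _] := HX u.
  rewrite /copy_card count_sum_b muln1.
  apply: eq_bigr => s _.
  by rewrite /padd [s.1 + _]addrC [s.2 + _]addrC.
have [t Ht] := @avg_ex _ (copy_card X U) S nS.
exists t.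
have sS : (0 < size S)%N by case: (S) nS.
have sR : (0 < size R)%N by case: (R) nR.
have key : (m * Delta S R * Delta R U <= copy_card X U t * (size S * size R))%N.
  apply: (@leq_trans (m * size R * size U)).
    rewrite -mulnA -[X in (_ <= X)%N]mulnA leq_mul2l; apply/orP; right.
    exact: leq_mul (Delta_le S R uS) (Delta_le R U uR).
  have E1 : (m * size R * size U = size R * (m * size U))%N.
    by rewrite mulnAC mulnC.
  have E2 : (copy_card X U t * (size S * size R) = size R * (size S * copy_card X U t))%N.
    by rewrite mulnC [(size S * size R)%N]mulnC mulnA.
  by rewrite E1 E2 leq_mul2l -Hsum Ht orbT.
rewrite -mulrA -mulrA mulrCA mulrC.
rewrite ler_pdivrMr; last by rewrite -natrM ltr0n muln_gt0 sS sR.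
by rewrite -!natrM ler_nat mulnA.
Qed.
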